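(* Let $\Omega$ be a compact Hausdorff space and let $\Gamma$ be a group acting minimally on $\Omega$ by homeomorphisms. Suppose that some element $g\in\Gamma$ has an attracting fixed point in $\Omega$. Then there is an integer $n$ such that for any nonempty open subsets $U_1,\dots,U_n$ of $\Omega$ there exist $t_1,\dots,t_n\in\Gamma$ with $t_1U_1\cup\dots\cup t_nU_n=\Omega$ (i.e. the action is $n$-filling).
   Context: An element $g\in\Gamma$ has an attracting fixed point $x\in\Omega$ if $gx=x$ and there exists a neighbourhood $V_x$ of $x$ such that $\lim_{n\to\infty}g^n(V_x)=\{x\}$ (i.e. for every neighbourhood $W$ of $x$, $g^n(V_x)\subset W$ for all sufficiently large $n$). *)

(* Defs.v *)
From mathcomp Require Import all_boot all_order all_algebra.
From mathcomp Require Import all_classical all_reals all_analysis.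
Set Implicit Arguments. Unset Strict Implicit. Unset Printing Implicit Defensive.
Local Open Scope classical_set_scope.

Definition is_group (G : Type) (mul : G -> G -> G) (one : G) (inv : G -> G) : Prop :=
  [/\ forall a b c, mul a (mul b c) = mul (mul a b) c,
      forall a, mul one a = a,
      forall a, mul a one = a,
      forall a, mul (inv a) a = one
    & forall a, mul a (inv a) = one].

(* A (left) action of the group on T by homeomorphisms: each act g is
   continuous; it is then a homeomorphism with inverse act (inv g). *)
Definition is_action_by_homeos (G : Type) (mul : G -> G -> G) (one : G)
    (T : topologicalType) (act : G -> T -> T) : Prop :=
  [/\ forall x, act one x = x,
      forall g h x, act (mul g h) x = act g (act h x)
    & forall g, continuous (act g)].

Definition minimal_action (G : Type) (T : topologicalType) (act : G -> T -> T) : Prop :=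
  forall x : T, closure [set act g x | g in [set: G]] = [set: T].

Definition attracting_fixed_point (G : Type) (T : topologicalType)
    (act : G -> T -> T) (g : G) (x : T) : Prop :=
  act g x = x /\
  exists V : set T, nbhs x V /\
    forall W : set T, nbhs x W ->
      exists N : nat, forall n : nat, (N <= n)%N -> iter n (act g) @` V `<=` W.

Definition n_filling (G : Type) (T : topologicalType) (act : G -> T -> T) (n : nat) : Prop :=
  forall U : 'I_n -> set T, (forall i, open (U i) /\ U i !=set0) ->
    exists t : 'I_n -> G, \bigcup_(i in [set: 'I_n]) (act (t i) @` U i) = [set: T].

(* Main.v *)
From HB Require Import structures.
Require Import Defs.
From mathcomp Require Import all_boot all_order all_algebra.
From mathcomp Require Import all_classical all_reals all_analysis.
Local Open Scope classical_set_scope.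

Definition withpt {T : Type} (t0 : T) := T.
HB.instance Definition _ (T : topologicalType) (t0 : T) := Topological.copy (withpt t0) T.
HB.instance Definition _ (T : topologicalType) (t0 : T) := isPointed.Build (withpt t0) t0.
Lemma cc_helper (T : topologicalType) (t0 : T) : compact [set: T] -> cover_compact [set: T].
Proof. move=> c. have := @compact_cover (withpt t0). move=> e. move: c. change (@compact (withpt t0) [set: withpt t0] -> @cover_compact (withpt t0) [set: withpt t0]). by rewrite e. Qed.

Theorem proposition2p5 (T : topologicalType) (G : Type)
    (mul : G -> G -> G) (one : G) (inv : G -> G) (act : G -> T -> T) :
  compact [set: T] -> hausdorff_space T ->
  is_group mul one inv ->
  is_action_by_homeos mul one act ->
  minimal_action act ->
  (exists (g : G) (x : T), attracting_fixed_point act g x) ->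
  exists n : nat, n_filling act n.
Proof.
move=> cT _ [mA m1 _ mV1 mV2] [a1 aM ac] mini [g [x [gx [V [Vx att]]]]].
have inv_act : forall h y, act (inv h) (act h y) = y.
  by move=> h y; rewrite -aM mV1 a1.
have act_inv : forall h y, act h (act (inv h) y) = y.
  by move=> h y; rewrite -aM mV2 a1.
have image_open : forall h U, open U -> open (act h @` U).
  move=> h U oU.
  have -> : act h @` U = act (inv h) @^-1` U.
    apply/seteqP; split => y /=.
      by case=> u Uu <-; rewrite inv_act.
    by move=> Uy; exists (act (inv h) y) => //; rewrite act_inv.
  by apply: open_comp => // z _; apply: ac.
have hit : forall y z U, open U -> U z -> exists h, U (act h y).
  move=> y z U oU Uz.
  have : closure [set act g0 y | g0 in [set: G]] z by rewrite mini.
  move=> /(_ U (open_nbhs_nbhs (conj oU Uz))) [w [[h _ <-] Uw]].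
  by exists h.
case: (pselect (exists t0 : T, True)) => [[t0 _]|nT]; last first.
  exists 0%N => U _; exists (fun _ => one).
  apply/seteqP; split => // y _; exfalso; apply: nT; by exists y.
pose Vo := V°.
have oVo : open Vo by apply: open_interior.
have Vox : Vo x by [].
have : forall y, exists h, (act h @` Vo) y.
  move=> y; have [h Hh] := hit y x Vo oVo Vox.
  by exists (inv h); exists (act h y) => //; rewrite inv_act.
move=> /choice [hf Hf].
have cov0 : [set: T] `<=` cover [set: T] (fun y => act (hf y) @` Vo).
  by move=> y _; exists y.
have [D' _ cov] := @cc_helper T t0 cT T setT (fun y => act (hf y) @` Vo)
  (fun y _ => image_open _ _ oVo) cov0.
pose sD := finmap.enum_fset D'. pose s := [seq hf y | y <- sD].
exists (size s) => U HU.
have gpowK : forall N v, act (iter N (mul (inv g)) one) (iter N (act g) v) = v.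
  elim=> [|N IH] v; first by rewrite /= a1.
  by rewrite [iter N.+1 (act g) v]iterSr iterS aM IH inv_act.
have : forall i : 'I_(size s), exists e, V `<=` act e @` U i.
  move=> i; have [oU [u Uu]] := HU i.
  have [k Hk] := hit x u (U i) oU Uu.
  pose W := act (inv k) @` U i.
  have nW : nbhs x W.
    apply: open_nbhs_nbhs; split; first exact: image_open.
    by exists (act k x) => //; rewrite inv_act.
  have [N HN] := att W nW.
  exists (mul (iter N (mul (inv g)) one) (inv k)) => v Vv.
  have [w Uw Hw] := HN N (leqnn N) (iter N (act g) v) (ex_intro2 _ _ v Vv erefl).
  by exists w => //; rewrite aM Hw gpowK.
move=> /choice [e He].
exists (fun i : 'I_(size s) => mul (nth one s i) (e i)).
apply/seteqP; split => // y _.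
have [z D'z [v Vov Hv]] := cov y I.
have zin : z \in sD by [].
have ilt : (index z sD < size s)%N by rewrite size_map index_mem.
exists (Ordinal ilt) => //=.
have Vv : V v := nbhs_singleton Vov.
have [u Uu Hu] := He (Ordinal ilt) v Vv.
exists u => //.
rewrite aM Hu /s (nth_map t0) ?index_mem // (nth_index t0 zin); exact: Hv.
Qed.
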